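(* For every $n\ge1$, the map $\psi$ defined below is a well-defined bijection from $\mathcal{S}_n$ to $\mathfrak{R}_n$.
   Context: A snake of length $n$ is a word $p_1\cdots p_n$ with $p_i\in\{\pm1,\dots,\pm n\}$ such that: - $|p_1|\cdots|p_n|$ is a permutation of $[n]$; - $p_1>0$; - $p_1>p_2<p_3>p_4<\cdots$. Let $\mathcal{S}_n$ be the set of snakes of length $n$. A permutation $\pi\in\mathfrak{S}_{2n}$ is alternating if $\pi_1>\pi_2<\pi_3>\cdots$. It is rc-invariant if $\pi_{2n+1-i}=2n+1-\pi_i$ for all $i$. Let $\mathfrak{R}_n$ be the set of rc-invariant alternating permutations of $[2n]$. For $p\in\mathcal{S}_n$, define $\tilde p_i=n+p_i$ if $p_i>0$ and $\tilde p_i=n+1+p_i$ if $p_i<0$. Then $\psi(p)$ is the unique rc-invariant permutation of $[2n]$ such that: - if $n$ is odd, its first $n$ entries are $\tilde p_n\tilde p_{n-1}\cdots\tilde p_1$; - if $n$ is even, its last $n$ entries are $\tilde p_1\cdots\tilde p_n$. Example: $p=2\,1\,5\,\bar4\,\bar3$ (where $\bar k=-k$) gives $\psi(p)=3\,2\,10\,6\,7\,4\,5\,1\,9\,8$. *)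

(* Defs.v *)
From HB Require Import structures.
From mathcomp Require Import all_boot all_order all_algebra.
Set Implicit Arguments. Unset Strict Implicit. Unset Printing Implicit Defensive.
Import Order.TTheory GRing.Theory Num.Theory.

(* Words are lists; entries are indexed from 0 in Rocq, i.e. nth x0 s i here is
   s_{i+1} in the paper. *)

Definition down_up {d} {T : porderType d} (x0 : T) (s : seq T) : Prop :=
  forall i, i.+1 < size s ->
    if ~~ odd i then (nth x0 s i.+1 < nth x0 s i)%O
    else (nth x0 s i < nth x0 s i.+1)%O.

Definition snake (n : nat) (p : seq int) : Prop :=
  [/\ size p = n,
      perm_eq (map absz p) (iota 1 n),
      (0 < nth 0 p 0)%R &
      down_up 0%R p].

Definition is_perm_2n (n : nat) (pi : seq nat) : Prop :=
  perm_eq pi (iota 1 (2 * n)).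

Definition rc_invariant (n : nat) (pi : seq nat) : Prop :=
  size pi = 2 * n /\
  forall i, 1 <= i <= 2 * n ->
    nth 0 pi (2 * n + 1 - i).-1 = 2 * n + 1 - nth 0 pi i.-1.

Definition rc_alt (n : nat) (pi : seq nat) : Prop :=
  [/\ is_perm_2n n pi, rc_invariant n pi & down_up 0 pi].

Definition tilde (n : nat) (x : int) : nat :=
  if (0 < x)%R then n + absz x else n.+1 - absz x.

Definition psi_spec (n : nat) (p : seq int) (pi : seq nat) : Prop :=
  [/\ is_perm_2n n pi, rc_invariant n pi &
      if odd n then take n pi = rev (map (tilde n) p)
      else drop n pi = map (tilde n) p].

(* Main.v *)
Require Import Defs.
From HB Require Import structures.
From mathcomp Require Import all_boot all_order all_algebra zify lra.
Import Order.TTheory GRing.Theory Num.Theory.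

Definition R {d} {T : porderType d} (b : bool) (a c : T) : bool :=
  if b then (a < c)%O else (c < a)%O.

Lemma RC {d} {T : porderType d} b (a c : T) : R (~~ b) a c = R b c a.
Proof. by case: b. Qed.

Lemma RN b (a c : int) : R b (- a)%R (- c)%R = R b c a.
Proof. by case: b; rewrite /R /= ltrN2. Qed.

Lemma du_iff {d} {T : porderType d} (x0 : T) s :
  down_up x0 s <-> forall i, i.+1 < size s -> R (odd i) (nth x0 s i) (nth x0 s i.+1).
Proof. by split=> H i /H; rewrite /R if_neg. Qed.

Lemma uniq_map_inj (T1 T2 : eqType) (f : T1 -> T2) s :
  uniq (map f s) -> {in s &, injective f}.
Proof.
elim: s => //= a s IH /andP[fa us] x y; rewrite !inE.
move=> /orP[/eqP->|xs] /orP[/eqP->|ys] e //.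
- by move: fa; rewrite e map_f.
- by move: fa; rewrite -e map_f.
- exact: IH.
Qed.

Lemma perm_iota N (s : seq nat) : (forall x, x \in s -> 1 <= x <= N) -> size s = N ->
  perm_eq s (iota 1 N) = uniq s.
Proof.
move=> hr hs; apply/idP/idP => [/perm_uniq->|us]; first exact: iota_uniq.
apply: uniq_perm => //; first exact: iota_uniq.
have H1 : {subset s <= iota 1 N} by move=> x /hr; rewrite mem_iota; lia.
have H2 : size (iota 1 N) <= size s by rewrite size_iota hs.
by have [_ E] := uniq_min_size us H1 H2.
Qed.

Lemma absz_cases (x y : int) : absz x = absz y -> x = y \/ x = (- y)%R.
Proof. case: x => [a|a]; case: y => [b|b] /=; rewrite ?NegzE; lia. Qed.
Section S.
Variable n : nat.
Definition untilde (m : nat) : int := if n < m then Posz (m - n) else (- Posz (n.+1 - m))%R.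
Definition Zn (x : int) := (x != 0)%R && (absz x <= n).
Ltac zt := rewrite /Zn /tilde /untilde /=; repeat case: ifP => ? //=; try lia.
Lemma tilde_range x : Zn x -> 1 <= tilde n x <= 2 * n.
Proof. case: x => [[|k]|k]; zt. Qed.
Lemma untildeK x : Zn x -> untilde (tilde n x) = x.
Proof. case: x => [[|k]|k]; zt. Qed.
Lemma untilde_range m : 1 <= m <= 2 * n -> Zn (untilde m).
Proof. zt. Qed.
Lemma tildeK m : 1 <= m <= 2 * n -> tilde n (untilde m) = m.
Proof. rewrite /untilde; case: ifP => h1 h2; rewrite /tilde; case: ifP => h3; rewrite ?abszN /=; lia. Qed.
Lemma ZnN x : Zn (- x)%R = Zn x.
Proof. by rewrite /Zn oppr_eq0 abszN. Qed.
Lemma tildeN x : Zn x -> tilde n (- x)%R = (2 * n).+1 - tilde n x.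
Proof. case: x => [[|k]|k]; zt. Qed.
Lemma tilde_lt x y : Zn x -> Zn y -> (tilde n x < tilde n y) = (x < y)%R.
Proof. case: x => [[|k]|k]; case: y => [[|j]|j]; zt. Qed.
Lemma tilde_inj x y : Zn x -> Zn y -> tilde n x = tilde n y -> x = y.
Proof. by move=> hx hy e; rewrite -(untildeK x hx) -(untildeK y hy) e. Qed.
Definition W (q : seq int) := rev q ++ map (fun x : int => (- x)%R) q.

Lemma size_W q : size (W q) = 2 * size q.
Proof. rewrite size_cat size_rev size_map; lia. Qed.

Lemma nthW_lo q i : size q = n -> i < n -> nth 0%R (W q) i = nth 0%R q (n - i.+1).
Proof. by move=> sq hi; rewrite nth_cat size_rev sq hi nth_rev ?sq. Qed.

Lemma nthW_hi q i : size q = n -> n <= i < 2 * n -> nth 0%R (W q) i = (- nth 0%R q (i - n))%R.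
Proof.
move=> sq hi; rewrite nth_cat size_rev sq ltnNge (andP hi).1 /=.
by rewrite (nth_map 0%R) // sq; lia.
Qed.

Lemma W_sym q i : size q = n -> i < 2 * n -> nth 0%R (W q) (2 * n - i.+1) = (- nth 0%R (W q) i)%R.
Proof.
move=> sq hi; case: (ltnP i n) => h.
- rewrite nthW_hi ?nthW_lo //; last lia.
  by have -> : 2 * n - i.+1 - n = n - i.+1 by lia.
- rewrite nthW_lo ?nthW_hi ?opprK //; try lia.
  by have -> : n - (2 * n - i.+1).+1 = i - n by lia.
Qed.

Lemma all_W q : all Zn q -> all Zn (W q).
Proof. by move=> h; rewrite all_cat all_rev h all_map; apply/allP => x /(allP h) /=; rewrite ZnN. Qed.

Lemma Zn_nth s i : all Zn s -> i < size s -> Zn (nth 0%R s i).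
Proof. by move=> /allP h hi; apply/h/mem_nth. Qed.

Lemma rc_nth a i : rc_invariant n a -> i < 2 * n -> nth 0 a i = (2 * n).+1 - nth 0 a (2 * n - i.+1).
Proof.
move=> [sa H] hi.
have h1 : 1 <= 2 * n - i <= 2 * n by lia.
have := H _ h1.
have -> : (2 * n + 1 - (2 * n - i)).-1 = i by lia.
have -> : (2 * n - i).-1 = 2 * n - i.+1 by lia.
by move=> ->; rewrite addn1.
Qed.
Definition sg (p : seq int) := if odd n then p else map (fun x : int => (- x)%R) p.

Lemma sgK p : sg (sg p) = p.
Proof. rewrite /sg; case: (odd n) => //; rewrite -map_comp; apply: map_id_in => x _ /=; exact: opprK. Qed.

Lemma size_sg p : size (sg p) = size p.
Proof. by rewrite /sg; case: ifP => //; rewrite size_map. Qed.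

Lemma all_sg p : all Zn (sg p) = all Zn p.
Proof. rewrite /sg; case: ifP => // _; rewrite all_map; apply: eq_all => x /=; exact: ZnN. Qed.

Lemma absz_sg p : map absz (sg p) = map absz p.
Proof. rewrite /sg; case: ifP => // _; rewrite -map_comp; apply: eq_map => x /=; exact: abszN. Qed.

Lemma nth_sg p k : k < size p -> nth 0%R (sg p) k = if odd n then nth 0%R p k else (- nth 0%R p k)%R.
Proof. by rewrite /sg; case: ifP => // _ hk; rewrite (nth_map 0%R). Qed.

Lemma R_tilde b x y : Zn x -> Zn y -> R b (tilde n x) (tilde n y) = R b x y.
Proof. by move=> hx hy; case: b; rewrite /R /=; [exact: tilde_lt | exact: tilde_lt]. Qed.

Lemma du_map s : all Zn s -> down_up 0 (map (tilde n) s) <-> down_up 0%R s.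
Proof.
move=> hs; rewrite !du_iff size_map; split=> H i hi; have := H i hi;
  rewrite !(nth_map 0%R) ?R_tilde //; try (apply: Zn_nth => //); exact: ltnW.
Qed.

Lemma odd_rel i j : i + j.+2 = n -> odd i = odd n (+) odd j.
Proof. by move=> <-; rewrite oddD /= negbK; case: (odd i); case: (odd j). Qed.

Lemma neg_lt (x : int) : ((- x)%R < x)%O = (0 < x)%R.
Proof. rewrite /=; lra. Qed.
Lemma du_W q : size q = n -> down_up 0%R (W q) <->
  forall i, i < n -> R (odd i) (nth 0%R (W q) i) (nth 0%R (W q) i.+1).
Proof.
move=> sq; rewrite du_iff size_W sq; split=> H i hi.
- apply: H; lia.
- case: (ltnP i n) => hin; first exact: H.
  have hj : 2 * n - i.+2 < n by lia.
  have := H _ hj.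
  rewrite (@W_sym q _ sq (_ : i.+1 < 2 * n)); last lia.
  have -> : (2 * n - (i.+1).+1).+1 = 2 * n - i.+1 by lia.
  rewrite (@W_sym q _ sq (_ : i < 2 * n)) ?RN; last lia.
  have -> // : odd (2 * n - i.+2) = odd i.
  by rewrite oddN ?oddM /= ?negbK //; lia.
Qed.

Lemma du_build p : 0 < n -> size p = n -> all Zn p ->
  down_up 0 (map (tilde n) (W (sg p))) <-> (0 < nth 0%R p 0)%R /\ down_up 0%R p.
Proof.
move=> n0 sp hp.
have sq : size (sg p) = n by rewrite size_sg.
rewrite du_map ?all_W ?all_sg // du_W // du_iff sp.
have mid : R (odd n.-1) (nth 0%R (W (sg p)) n.-1) (nth 0%R (W (sg p)) n.-1.+1) = (0 < nth 0%R p 0)%R.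
  rewrite prednK // (@nthW_lo _ n.-1) //; last lia.
  rewrite (@nthW_hi _ n) //; last lia.
  have -> : n - n.-1.+1 = 0 by lia.
  rewrite subnn nth_sg ?sp //.
  case: n n0 {sp sq} => [//|m] _ /=.
  by case: (odd m) => /=; rewrite /R /= ?opprK neg_lt.
have lo : forall j, j.+1 < n ->
   R (odd (n - j.+2)) (nth 0%R (W (sg p)) (n - j.+2)) (nth 0%R (W (sg p)) (n - j.+2).+1)
   = R (odd j) (nth 0%R p j) (nth 0%R p j.+1).
  move=> j hj.
  rewrite !nthW_lo //; try lia.
  have -> : n - (n - j.+2).+1 = j.+1 by lia.
  have -> : n - (n - j.+2).+2 = j by lia.
  rewrite !nth_sg ?sp //; try lia.
  rewrite (@odd_rel (n - j.+2) j); last lia.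
  by case: (odd n) => /=; rewrite ?RC ?RN.
split=> [H|[h0 H] i hi].
- split; first by rewrite -mid; apply: H; lia.
  move=> j hj; rewrite -lo //; apply: H; lia.
- have [->|ne] := eqVneq i n.-1; first by rewrite mid.
  have -> : i = n - (n - i.+2).+2 by lia.
  rewrite lo; last lia.
  apply: H; lia.
Qed.
Lemma rc_build q : size q = n -> all Zn q -> rc_invariant n (map (tilde n) (W q)).
Proof.
move=> sq hq; split; first by rewrite size_map size_W sq.
move=> i hi.
have -> : (2 * n + 1 - i).-1 = 2 * n - (i.-1).+1 by lia.
have hk : i.-1 < 2 * n by lia.
rewrite !(nth_map 0%R) ?size_W ?sq; try lia.
rewrite (@W_sym q _ sq hk) tildeN ?addn1 //.
by apply: Zn_nth; rewrite ?all_W ?size_W ?sq.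
Qed.

Lemma uniqW q : all Zn q -> uniq (W q) = uniq (map absz q).
Proof.
move=> hz; apply/idP/idP.
- rewrite /W cat_uniq rev_uniq => /and3P[uq nh _].
  rewrite map_inj_in_uniq // => x y xq yq e.
  case: (absz_cases _ _ e) => // exy; exfalso.
  apply: (negP nh); apply/hasP; exists x; last by rewrite mem_rev.
  by rewrite exy; apply: map_f.
- move=> u; have uq := map_uniq u; have inj := @uniq_map_inj _ _ _ _ u.
  rewrite /W cat_uniq rev_uniq uq (map_inj_uniq oppr_inj) uq andbT /=.
  apply/hasP => -[x /mapP[y yq ->]]; rewrite mem_rev => myq.
  have := inj _ _ myq yq (abszN y) => e.
  move: (allP hz y yq); rewrite /Zn => /andP[/eqP hy _]; apply: hy.
  lia.
Qed.

Lemma perm_build q : size q = n -> all Zn q ->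
  is_perm_2n n (map (tilde n) (W q)) = perm_eq (map absz q) (iota 1 n).
Proof.
move=> sq hq; rewrite /is_perm_2n perm_iota; first last.
- by rewrite size_map size_W sq.
- by move=> x /mapP[y /(allP (all_W q hq)) yz ->]; apply: tilde_range.
rewrite perm_iota; first last.
- by rewrite size_map sq.
- by move=> x /mapP[y /(allP hq) yz ->]; move: yz; rewrite /Zn => /andP[]; lia.
rewrite map_inj_in_uniq ?uniqW //.
move=> x y /(allP (all_W q hq)) hx /(allP (all_W q hq)) hy; exact: tilde_inj.
Qed.

Lemma rc_take a b : rc_invariant n a -> rc_invariant n b -> take n a = take n b -> a = b.
Proof.
move=> ra rb e; have [sa _] := ra; have [sb _] := rb.
apply: (@eq_from_nth _ 0); first by rewrite sa sb.
move=> i; rewrite sa => hi.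
have lo k : k < n -> nth 0 a k = nth 0 b k.
  by move=> hk; rewrite -(nth_take 0 hk) e (nth_take 0 hk).
case: (ltnP i n) => h; first exact: lo.
rewrite (rc_nth _ _ ra hi) (rc_nth _ _ rb hi) lo //; lia.
Qed.

Lemma rc_drop a b : rc_invariant n a -> rc_invariant n b -> drop n a = drop n b -> a = b.
Proof.
move=> ra rb e; have [sa _] := ra; have [sb _] := rb.
apply: (@eq_from_nth _ 0); first by rewrite sa sb.
move=> i; rewrite sa => hi.
have hiK k : n <= k -> nth 0 a k = nth 0 b k.
  by move=> hk; rewrite -(subnKC hk) -!nth_drop e.
case: (ltnP i n) => h; last exact: hiK.
rewrite (rc_nth _ _ ra hi) (rc_nth _ _ rb hi) hiK //; lia.
Qed.

Lemma build_td p : size p = n ->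
  if odd n then take n (map (tilde n) (W (sg p))) = rev (map (tilde n) p)
  else drop n (map (tilde n) (W (sg p))) = map (tilde n) p.
Proof.
move=> sp; rewrite /sg /W; case: (odd n).
- rewrite map_cat take_size_cat; first by rewrite map_rev. 
  by rewrite size_map size_rev sp.
- rewrite -map_drop drop_size_cat; last by rewrite size_rev size_map sp.
  by rewrite -!map_comp; apply: eq_map => x /=; rewrite opprK.
Qed.
End S.

Arguments du_build {n p}.
Arguments rc_take {n a b}.
Arguments rc_drop {n a b}.
Arguments rc_build {n q}.
Arguments perm_build {n q}.
Arguments build_td {n p}.
Arguments tildeK {n m}.
Arguments untildeK {n x}.
Arguments untilde_range {n m}.

Lemma snake_Zn {n p} : perm_eq (map absz p) (iota 1 n) -> all (Zn n) p.
Proof.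
move=> h; apply/allP => x xp; have := map_f absz xp; rewrite (perm_mem h) mem_iota.
rewrite /Zn; case: x {xp} => [[|k]|k] //=; lia.
Qed.

Theorem theorem3p2 (n : nat) : 1 <= n ->
  [/\ (forall p, snake n p -> exists! pi, psi_spec n p pi),
      (forall p pi, snake n p -> psi_spec n p pi -> rc_alt n pi) &
      (forall pi, rc_alt n pi -> exists! p, snake n p /\ psi_spec n p pi)].
Proof.
move=> n0.
have spec_build p : size p = n -> perm_eq (map absz p) (iota 1 n) ->
    psi_spec n p (map (tilde n) (W (sg n p))).
  move=> sp pp; have hz := snake_Zn pp.
  split; last exact: build_td.
  - by rewrite perm_build ?size_sg ?all_sg ?absz_sg.
  - by apply: rc_build; rewrite ?size_sg ?all_sg.
have uniq_spec p a b : psi_spec n p a -> psi_spec n p b -> a = b.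
  case=> _ ra ta [_ rb tb]; move: ta tb; case: (odd n) => ta tb.
  - by apply: (rc_take ra rb); rewrite ta tb.
  - by apply: (rc_drop ra rb); rewrite ta tb.
split.
- move=> p [sp pp p0 dp]; exists (map (tilde n) (W (sg n p))); split.
    exact: spec_build.
  move=> pi' h; exact: uniq_spec (spec_build _ sp pp) h.
- move=> p pi [sp pp p0 dp] h.
  have e := uniq_spec _ _ _ h (spec_build _ sp pp).
  case: h => hperm hrc _; split => //.
  by rewrite e; apply/(du_build n0 sp (snake_Zn pp)).
- move=> pi [hp hr hd].
  have range m : m \in pi -> 1 <= m <= 2 * n.
    by rewrite (perm_mem hp) mem_iota; lia.
  have [spi _] := hr.
  set q := rev (map (untilde n) (take n pi)).
  have sq : size q = n by rewrite size_rev size_map size_takel // spi; lia.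
  have hq : all (Zn n) q.
    rewrite all_rev all_map; apply/allP => m /mem_take /range /=; exact: untilde_range.
  have epi : pi = map (tilde n) (W q).
    apply: (rc_take hr (rc_build sq hq)).
    rewrite -map_take take_size_cat; last by rewrite size_rev.
    rewrite /q (@revK int) -map_comp.
    rewrite -[LHS]map_id; apply/eq_in_map => m /mem_take /range hm /=.
    by rewrite tildeK.
  have sgq : sg n (sg n q) = q by rewrite sgK.
  have Psnake : snake n (sg n q).
    have := (du_build n0 (_ : size (sg n q) = n) (_ : all (Zn n) (sg n q))).
    rewrite sgq -epi size_sg sq all_sg hq => /(_ erefl erefl) [/(_ hd) [h1 h2] _].
    split => //; first by rewrite size_sg.
    by rewrite absz_sg -perm_build // -epi.
  exists (sg n q); split.
    split => //.
    have := spec_build _ (_ : size (sg n q) = n) (_ : perm_eq (map absz (sg n q)) (iota 1 n)).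
    by case: Psnake => s1 s2 _ _; rewrite sgq -epi; apply.
  move=> p' [[sp' pp' _ _] hs'].
  have e' := uniq_spec _ _ _ hs' (spec_build _ sp' pp').
  have hz' := snake_Zn pp'.
  have : take n pi = map (tilde n) (rev (sg n p')).
    by rewrite e' -map_take take_size_cat // size_rev size_sg.
  move=> et; rewrite /q et -map_comp map_rev revK.
  have -> : map (untilde n \o tilde n) (sg n p') = sg n p'.
    rewrite -[RHS]map_id; apply/eq_in_map => x.
    rewrite -all_sg in hz'; move/allP: hz' => hz' /hz' hx /=.
    by rewrite untildeK.
  by rewrite sgK.
Qed.
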